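(* Let $X$ be a finite connected rack with $n$ elements, identified with $[n]=\{1,\dots,n\}$ via a fixed bijection, and let $\mathcal{M}$ be the set of maximal (proper) subracks of $X$. Then every $S\in\mathsf{Inf}(\mathcal{R}(X))$ satisfies $\eta(S)=S$, i.e. $\mathsf{Inf}(\mathcal{R}(X))\subseteq\eta(\mathcal{R}(X))$; consequently $\pi$ restricts to an isomorphism of posets between $\mathsf{Inf}(\mathcal{R}(X))$ and $\pi(\mathsf{Inf}(\mathcal{R}(X)))\subseteq\Pi_n$. Moreover, $\mathsf{Inf}(\mathcal{R}(X))$ is isomorphic to a subposet of $\mathsf{Inf}(\Pi_n,\pi(\mathcal{M}))$.
   Context: A rack is a set $X$ with a binary operation $\triangleright$ such that $a\triangleright(b\triangleright c)=(a\triangleright b)\triangleright(a\triangleright c)$ for all $a,b,c$, and each map $\phi_a\colon x\mapsto a\triangleright x$ is a bijection of $X$. Subracks are subsets closed under $\triangleright$ (including $\emptyset$); $\mathcal{R}(X)$ is the lattice of subracks ordered by inclusion, and $\overline{\mathcal{R}(X)}=\mathcal{R}(X)\setminus\{X,\emptyset\}$. $\mathsf{Inn}(X)=\langle\phi_a: a\in X\rangle$; $X$ is connected if $\mathsf{Inn}(X)$ acts transitively on $X$. For a subrack $S$, its orbit structure $\pi(S)$ is the partition of $X$ into the orbits of the group $\langle\phi_a: a\in S\rangle$; $\eta(S)$ is the largest subrack of $X$ having the same orbit structure as $S$. $\Pi_n$ is the lattice of set partitions of $[n]$ ordered by refinement. For a finite lattice $\mathcal{L}$ with proper part $\overline{\mathcal{L}}$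 (maximum and minimum removed) and $\mathcal{S}\subseteq\overline{\mathcal{L}}$, $\mathsf{Inf}(\mathcal{L},\mathcal{S})$ is the subposet of $\overline{\mathcal{L}}$ consisting of elements that are meets of sets of elements of $\mathcal{S}$; $\mathsf{Inf}(\mathcal{L})=\mathsf{Inf}(\mathcal{L},\text{coatoms of }\mathcal{L})$. *)

(* Defs.v *)
From mathcomp Require Import all_boot all_fingroup.
Set Implicit Arguments. Unset Strict Implicit. Unset Printing Implicit Defensive.

Section Rack.
Variable n : nat.
Notation T := 'I_n.
Variable op : T -> T -> T.

Definition is_rack : Prop :=
  (forall a b c, op a (op b c) = op (op a b) (op a c)) /\
  (forall a, bijective (op a)).

(* phi_a as a permutation (identity if op a were not injective; never
   happens for a rack). *)
Definition phi (a : T) : {perm T} :=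
  match @idP (injectiveb (op a)) with
  | ReflectT h => perm (injectiveP _ h)
  | ReflectF _ => 1%g
  end.

Definition subrack (S : {set T}) : bool :=
  [forall a in S, forall b in S, op a b \in S].

Definition gen_grp (S : {set T}) : {group {perm T}} :=
  <<[set phi a | a in S]>>%G.

Definition Inn : {group {perm T}} := gen_grp [set: T].

Definition connected : Prop := [transitive Inn, on [set: T] | 'P].

Definition orbit_str (S : {set T}) : {set {set T}} :=
  [set orbit 'P (gen_grp S) x | x : T].

(* eta(S): the largest subrack with the same orbit structure as S,
   i.e. the union of all such subracks *)
Definition eta (S : {set T}) : {set T} :=
  \bigcup_(R : {set T} | subrack R && (orbit_str R == orbit_str S)) R.

Definition maximal_subrack (M : {set T}) : bool :=
  [&& subrack M, M != [set: T] &
      [forall R : {set T}, (subrack R && (M \proper R)) ==> (R == [set: T])]].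

(* Inf(R(X)) : proper subracks that are intersections (= meets in R(X))
   of sets of maximal subracks *)
Definition InfR (S : {set T}) : Prop :=
  [/\ subrack S, S != [set: T], S != set0 &
      exists F : {set {set T}},
        (forall M, M \in F -> maximal_subrack M) /\
        S = \bigcap_(M in F) M].

Definition is_part (P : {set {set T}}) : bool := partition P [set: T].

Definition refines (P Q : {set {set T}}) : bool :=
  [forall B in P, exists C in Q, B \subset C].

Definition part_bot : {set {set T}} := [set [set x] | x : T].
Definition part_top : {set {set T}} := [set [set: T]].

Definition is_meet_part (G : {set {set {set T}}}) (P : {set {set T}}) : Prop :=
  is_part P /\
  (forall Q, Q \in G -> refines P Q) /\
  (forall R, is_part R -> (forall Q, Q \in G -> refines R Q) -> refines R P).

Definition InfPi (F : {set {set {set T}}}) (P : {set {set T}}) : Prop :=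
  [/\ is_part P, P != part_bot, P != part_top &
      exists G : {set {set {set T}}}, G \subset F /\ is_meet_part G P].

Definition pi_maximals : {set {set {set T}}} :=
  [set orbit_str M | M in [set M : {set T} | maximal_subrack M]].

End Rack.

(* Main.v *)
Require Import Defs.
From mathcomp Require Import all_boot all_fingroup.
Set Implicit Arguments. Unset Strict Implicit. Unset Printing Implicit Defensive.

Section Helpers.
Variables (n : nat) (op : 'I_n -> 'I_n -> 'I_n).
Hypothesis Hr : is_rack op.
Hypothesis Hc : connected op.
Local Notation T := 'I_n.
Local Open Scope group_scope.

Lemma phiE a x : phi op a x = op a x.
Proof.
rewrite /phi; destruct (@idP (injectiveb (op a))) as [h|h]; first by rewrite permE.
exfalso; apply: h; apply/injectiveP; case: Hr => _ /(_ a) /bij_inj //.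
Qed.

Lemma phi_op x y : phi op (op x y) = (phi op x)^-1 * phi op y * phi op x.
Proof.
apply: (mulgI (phi op x)); rewrite !mulgA mulgV mul1g.
apply/permP => z; rewrite !permM !phiE; case: Hr => H _; by rewrite -H.
Qed.

Lemma normP (M : {set T}) (p : {perm T}) :
  (forall x, x \in M -> p x \in M) -> p \in 'N(M | 'P).
Proof. move=> H; rewrite !inE; apply/subsetP => x Mx; by rewrite inE /= /aperm H. Qed.

Lemma subrack_norm (M : {set T}) a : subrack op M -> a \in M -> phi op a \in 'N(M | 'P).
Proof.
move=> /forall_inP sM Ma; apply: normP => x Mx; rewrite phiE.
exact: (forall_inP (sM a Ma)).
Qed.

Lemma gen_norm (M : {set T}) : subrack op M -> gen_grp op M \subset 'N(M | 'P).
Proof.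
move=> sM; rewrite gen_subG; apply/subsetP => _ /imsetP [a Ma ->].
exact: subrack_norm.
Qed.

Lemma orbit_subM (M : {set T}) x : subrack op M -> x \in M ->
  orbit 'P (gen_grp op M) x \subset M.
Proof.
move=> sM Mx; apply/subsetP => _ /imsetP [g Gg ->].
by rewrite (astabs_act _ (subsetP (gen_norm sM) g Gg)).
Qed.

Lemma phi_in_gen (S : {set T}) a : a \in S -> phi op a \in gen_grp op S.
Proof. by move=> Sa; apply: mem_gen; apply: imset_f. Qed.

Lemma orbitS' (A B : {set T}) x : A \subset B ->
  orbit 'P (gen_grp op A) x \subset orbit 'P (gen_grp op B) x.
Proof. by move=> sAB; apply: imsetS; apply: genS; apply: imsetS. Qed.

Lemma same_orbit (G : {group {perm T}}) w x y :
  x \in orbit 'P G w -> y \in orbit 'P G w -> y \in orbit 'P G x.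
Proof. by move=> /orbit_eqP->. Qed.

Lemma orbit_ref (R M : {set T}) x : refines (orbit_str op R) (orbit_str op M) ->
  orbit 'P (gen_grp op R) x \subset orbit 'P (gen_grp op M) x.
Proof.
move=> /forall_inP H.
have /H /exists_inP [C /imsetP [w _ ->] sub] : orbit 'P (gen_grp op R) x \in orbit_str op R.
  by apply/imsetP; exists x.
apply/subsetP => y Hy; apply: (same_orbit (w := w)).
  exact: (subsetP sub _ (orbit_refl _ _ _)).
exact: (subsetP sub).
Qed.

Lemma refines_trans (P Q Q' : {set {set T}}) : refines P Q -> refines Q Q' -> refines P Q'.
Proof.
move=> /forall_inP H1 /forall_inP H2; apply/forall_inP => B /H1 /exists_inP [C CQ sBC].
have /exists_inP [C' C'Q sCC'] := H2 C CQ.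
apply/exists_inP; exists C' => //; exact: subset_trans sBC sCC'.
Qed.

Lemma refines_sub (A B : {set T}) : A \subset B -> refines (orbit_str op A) (orbit_str op B).
Proof.
move=> sAB; apply/forall_inP => _ /imsetP [x _ ->]; apply/exists_inP.
exists (orbit 'P (gen_grp op B) x); first by apply/imsetP; exists x.
exact: orbitS'.
Qed.

Lemma orbit_str_part (S : {set T}) : is_part (orbit_str op S).
Proof.
have -> : orbit_str op S = orbit 'P (gen_grp op S) @: [set: T].
  by apply/setP => B; apply/imsetP/imsetP => [] [x _ ->]; exists x.
apply: orbit_partition; apply/subsetP => g _; apply: normP => x _; exact: in_setT.
Qed.

Lemma key (R M : {set T}) x0 : subrack op R -> maximal_subrack op M -> x0 \in M ->
  refines (orbit_str op R) (orbit_str op M) -> R \subset M.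
Proof.
move=> sR /and3P [sM MT /forallP Mmax] Mx0 Href.
apply/subsetP => r Rr; apply/negPn/negP => rM.
have hR : forall a, a \in M -> phi op r a \in M.
  move=> a Ma; apply: (subsetP (orbit_subM sM Ma)).
  apply: (subsetP (orbit_ref a Href)).
  exact: (mem_orbit 'P a (phi_in_gen Rr)).
pose N := [set x | phi op x \in 'N(M | 'P)].
have sN : subrack op N.
  apply/forall_inP => x; rewrite inE => Nx; apply/forall_inP => y; rewrite inE => Ny.
  by rewrite inE phi_op; apply: groupM; [apply: groupM; [rewrite groupV|]|].
have MN : M \proper N.
  rewrite properE; apply/andP; split.
    by apply/subsetP => x Mx; rewrite inE subrack_norm.
  apply/negP => /subsetP H; move/negP: rM; apply; apply: H; rewrite inE; exact: normP.
have /eqP NT := implyP (Mmax N) (introT andP (conj sN MN)).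
have InnN : Inn op \subset 'N(M | 'P).
  rewrite gen_subG; apply/subsetP => _ /imsetP [x _ ->].
  have : x \in N by rewrite NT in_setT.
  by rewrite inE.
have Horb := atransP Hc x0 (in_setT x0).
move/negP: MT; apply; apply/eqP/setP => y; rewrite in_setT.
have : y \in orbit 'P (Inn op) x0 by rewrite Horb in_setT.
case/imsetP => g Gg ->; by rewrite (astabs_act _ (subsetP InnN g Gg)).
Qed.

Lemma phi_nontriv (S : {set T}) a : a \in S -> S != [set: T] -> exists z, phi op a z != z.
Proof.
move=> Sa ST; case: (pickP (fun z => phi op a z != z)) => [z Hz | H]; first by exists z.
exfalso.
have a1 : phi op a = 1 by apply/permP => z; rewrite perm1; apply/eqP; move/negbFE: (H z).
pose K := [set x | phi op x == 1].
have InnK : Inn op \subset 'N(K | 'P).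
  rewrite gen_subG; apply/subsetP => _ /imsetP [b _ ->]; apply: normP => x.
  rewrite !inE phiE phi_op => /eqP ->; by rewrite mulg1 mulVg.
have Horb := atransP Hc a (in_setT a).
have allK : forall y, phi op y = 1.
  move=> y; have : y \in orbit 'P (Inn op) a by rewrite Horb in_setT.
  case/imsetP => g Gg ->.
  have : aperm a g \in K by rewrite (astabs_act _ (subsetP InnK g Gg)) inE a1.
  by rewrite inE => /eqP.
have InnC : Inn op \subset 'C[a | 'P].
  rewrite gen_subG; apply/subsetP => _ /imsetP [b _ ->]; apply/astab1P.
  by rewrite /= /aperm allK perm1.
move/negP: ST; apply; apply/eqP/setP => y; rewrite in_setT.
have : y \in orbit 'P (Inn op) a by rewrite Horb in_setT.
case/imsetP => g Gg ->; by rewrite (astab1P (subsetP InnC g Gg)).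
Qed.

Definition FS (S : {set T}) := [set M | maximal_subrack op M & S \subset M].
Definition Erel (S : {set T}) := fun x y : T => [forall M in FS S, y \in orbit 'P (gen_grp op M) x].
Definition fS (S : {set T}) := equivalence_partition (Erel S) [set: T].

Lemma Erel_equiv (S : {set T}) : {in [set: T] & &, equivalence_rel (Erel S)}.
Proof.
move=> x y z _ _ _; split; first by apply/forall_inP => M _; exact: orbit_refl.
move=> /forall_inP Exy.
apply/forall_inP/forall_inP => H M HM; have := H M HM;
  (have e : orbit 'P (gen_grp op M) x = orbit 'P (gen_grp op M) y
    by apply/orbit_eqP; rewrite orbit_sym; exact: Exy);
  by rewrite e.
Qed.

Lemma fS_part (S : {set T}) : is_part (fS S).
Proof. exact: equivalence_partitionP (Erel_equiv S). Qed.

Lemma fS_refines (S M : {set T}) : M \in FS S -> refines (fS S) (orbit_str op M).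
Proof.
move=> HM; apply/forall_inP => B /imsetP [x _ ->]; apply/exists_inP.
exists (orbit 'P (gen_grp op M) x); first by apply/imsetP; exists x.
apply/subsetP => y; rewrite inE => /andP [_ /forall_inP H]; exact: H.
Qed.

Lemma fS_glb (S : {set T}) (R : {set {set T}}) : is_part R ->
  (forall M, M \in FS S -> refines R (orbit_str op M)) -> refines R (fS S).
Proof.
move=> /and3P [_ _ R0] H; apply/forall_inP => B BR.
have /set0Pn [x Bx] : B != set0 by apply/negP => /eqP B0; move: R0; rewrite -B0 BR.
apply/exists_inP; exists [set y in [set: T] | Erel S x y]; first by apply: imset_f.
apply/subsetP => y By; rewrite inE in_setT /=; apply/forall_inP => M HM.
have /exists_inP [C /imsetP [w _ ->] sBC] := forall_inP (H M HM) B BR.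
apply: (same_orbit (w := w)); exact: (subsetP sBC).
Qed.

Section Inf.
Variable S : {set T}.
Hypothesis HS : InfR op S.

Lemma S_eq : S = \bigcap_(M in FS S) M.
Proof.
case: HS => _ _ _ [F [FM ->]]; apply/setP => x; apply/bigcapP/bigcapP.
  move=> Hx M; rewrite inE => /andP [_ /subsetP sub]; apply: sub; exact/bigcapP.
by move=> Hx M MF; apply: Hx; rewrite inE FM //= (bigcap_inf M MF).
Qed.

Lemma exM : exists M, M \in FS S.
Proof.
case: HS => _ ST _ _.
have [x xS] : exists x, x \notin S.
  case: (pickP (fun x => x \notin S)) => [x Hx|H]; first by exists x.
  move/negP: ST; case; apply/eqP/setP => y; rewrite in_setT; exact/negbFE/H.
case: (pickP (fun M => (M \in FS S) && (x \notin M))) => [M /andP [HM _]|H].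
  by exists M.
move/negP: xS; case; rewrite S_eq; apply/bigcapP => M HM.
by move: (H M); rewrite HM /= => /negbFE.
Qed.

Lemma S_n0 : exists x, x \in S.
Proof. by case: HS => _ _ /set0Pn. Qed.

Lemma sub_from (R : {set T}) : subrack op R ->
  (forall M, M \in FS S -> refines (orbit_str op R) (orbit_str op M)) -> R \subset S.
Proof.
move=> sR H; have [x0 Sx0] := S_n0.
apply/subsetP => x Rx; rewrite S_eq; apply/bigcapP => M HM.
have HM' := HM; rewrite inE in HM'; case/andP: HM' => mM /subsetP sSM.
exact: (subsetP (key sR mM (sSM _ Sx0) (H M HM))).
Qed.

Lemma FS_sub (M : {set T}) : M \in FS S -> S \subset M.
Proof. by rewrite inE => /andP []. Qed.

Lemma piS_fS : refines (orbit_str op S) (fS S).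
Proof.
apply: fS_glb; first exact: orbit_str_part.
move=> M HM; apply: refines_sub; exact: FS_sub.
Qed.

Lemma fS_ntop : fS S != part_top n.
Proof.
apply/negP => /eqP Ht.
have [M HM] := exM; have [x0 Sx0] := S_n0.
have Mx0 := subsetP (FS_sub HM) _ Sx0.
have := HM; rewrite inE => /andP [/and3P [sM MT _] _].
have : [set y in [set: T] | Erel S x0 y] \in fS S by apply: imset_f.
rewrite Ht inE => /eqP Hb.
move/negP: MT; apply; apply/eqP/setP => y; rewrite in_setT.
have : y \in [set y in [set: T] | Erel S x0 y] by rewrite Hb in_setT.
rewrite inE in_setT /= => /forall_inP /(_ M HM) Hy.
exact: (subsetP (orbit_subM sM Mx0)).
Qed.

Lemma fS_nbot : fS S != part_bot n.
Proof.
apply/negP => /eqP Hb.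
have [a Sa] := S_n0.
have ST : S != [set: T] by case: HS.
have [z Hz] := phi_nontriv Sa ST.
have : orbit 'P (gen_grp op S) z \in orbit_str op S by apply/imsetP; exists z.
move/(forall_inP piS_fS).
case/exists_inP => C; rewrite Hb => /imsetP [w _ ->] /subsetP sub.
have h1 := sub _ (orbit_refl _ _ z).
have h2 := sub _ (mem_orbit 'P z (phi_in_gen Sa)).
rewrite !inE in h1 h2; move/negP: Hz; apply.
by rewrite /= /aperm in h2; rewrite (eqP h2) (eqP h1).
Qed.

End Inf.

Lemma main_sub (S R : {set T}) : InfR op S -> InfR op R ->
  refines (orbit_str op S) (orbit_str op R) -> S \subset R.
Proof.
move=> HS HR H; apply: (sub_from HR); first by case: HS.
move=> M HM; apply: (refines_trans H); apply: refines_sub; exact: FS_sub.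
Qed.

End Helpers.

Theorem mainTheorem4 (n : nat) (op : 'I_n -> 'I_n -> 'I_n) :
  is_rack op -> connected op ->
  (forall S, InfR op S -> eta op S = S) /\
  (forall S R, InfR op S -> InfR op R ->
     (S \subset R) <-> refines (orbit_str op S) (orbit_str op R)) /\
  (exists f : {set 'I_n} -> {set {set 'I_n}},
     (forall S, InfR op S -> InfPi (pi_maximals op) (f S)) /\
     (forall S R, InfR op S -> InfR op R ->
        (S \subset R) <-> refines (f S) (f R))).
Proof.
move=> Hr Hc; split; last split.
- move=> S HS; apply/eqP; rewrite eqEsubset; apply/andP; split.
    apply/bigcupsP => R /andP [sR /eqP e].
    apply: (sub_from Hr Hc HS sR) => M HM; rewrite e; apply: refines_sub.
    exact: (FS_sub HM).
  apply: (bigcup_sup S); apply/andP; split; [by case: HS | exact: eqxx].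
- move=> S R HS HR; split; first exact: refines_sub.
  exact: (main_sub Hr Hc).
exists (fS op); split.
- move=> S HS; split.
  + exact: fS_part.
  + exact: (fS_nbot Hr Hc HS).
  + exact: (fS_ntop Hr HS).
  exists [set orbit_str op M | M in FS op S]; split.
    apply: imsetS; apply/subsetP => M; rewrite !inE => /andP [] //.
  split; first exact: fS_part.
  split.
    by move=> Q /imsetP [M HM ->]; apply: fS_refines.
  move=> R' pR H; apply: fS_glb => // M HM; apply: H; exact: imset_f.
- move=> S R HS HR; split.
    move=> sSR; apply: fS_glb; first exact: fS_part.
    move=> M HM; apply: fS_refines; rewrite /FS !inE in HM *.
    case/andP: HM => mM sRM; rewrite mM; exact: subset_trans sSR sRM.
  move=> H; apply: (sub_from Hr Hc HR); first by case: HS.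
  move=> M HM; apply: (refines_trans (piS_fS op S)).
  exact: (refines_trans H (fS_refines HM)).
Qed.
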